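(* Let $q\in\mathbb{C}\setminus\{0\}$, let $n\ge 1$ be an integer, and let $P,f\in\mathbb{C}[x^{-1}][[x]]$ with $P\neq 0$ satisfy $$x\,\sigma_q f+f=P .$$ Then $$L_{n,n}^P\,(f^n)=(-1)^{n(n-1)/2},$$ where $$L_{n,n}^P=\frac{1}{P_n}\left(x\sigma_q+1\right)\frac{1}{P_{n-1}}\left(x^2\sigma_q-1\right)\cdots\frac{1}{P_1}\left(x^n\sigma_q-(-1)^n\right),$$ i.e. $L_{n,n}^P=\frac{1}{P_n}\left(x^{1}\sigma_q-(-1)^{1}\right)\frac{1}{P_{n-1}}\left(x^{2}\sigma_q-(-1)^{2}\right)\cdots\frac{1}{P_1}\left(x^{n}\sigma_q-(-1)^{n}\right)$.
   Context: $\mathbb{C}[x^{-1}][[x]]$ is the field of formal Laurent series in $x$ with finitely many negative powers. $\sigma_q$ is the automorphism $\sigma_q f(x)=f(qx)$ of this field; $\sigma_q^k=\sigma_{q^k}$. Elements of the field act as multiplication operators, and products of operators denote composition. Define the sequence $P_0=0$, $P_1=P$, and $P_m=\sum_{k=0}^{m-1}(-x\sigma_q)^kP$ for $m\ge 2$ (so $(-x\sigma_q)^kP=(-x)^kq^{k(k-1)/2}\sigma_q^kP$). These $P_m$ ($m\ge1$) are nonzero, so the operator above is well defined. *)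

(* Defs.v *)
From HB Require Import structures.
From mathcomp Require Import all_boot all_order all_algebra complex.
From mathcomp Require Import Rstruct.
From Stdlib Require Import ClassicalEpsilon.
Set Implicit Arguments. Unset Strict Implicit. Unset Printing Implicit Defensive.
Import Order.TTheory GRing.Theory Num.Theory.
Local Open Scope ring_scope.

Definition C : numClosedFieldType := (Rdefinitions.R)[i].

Definition laurent := {c : int -> C | exists m : int, forall k : int, k < m -> c k = 0}.

Definition coef (f : laurent) : int -> C := proj1_sig f.

Definition lbd (f : laurent) : int :=
  proj1_sig (constructive_indefinite_description _ (proj2_sig f)).

Lemma lbdP (f : laurent) k : k < lbd f -> coef f k = 0.
Proof.
rewrite /lbd /coef.
by case: (constructive_indefinite_description _ _) => m Hm /= /Hm.
Qed.

Definition mkL (c : int -> C) (m : int) (H : forall k, k < m -> c k = 0) : laurent :=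
  exist _ c (ex_intro _ m H).

Definition lconst (a : C) : laurent.
Proof.
refine (@mkL (fun k => if k == 0 then a else 0) 0 _).
by move=> k Hk; rewrite (negbTE (ltr0_neq0 Hk)).
Defined.

Definition ladd (f g : laurent) : laurent.
Proof.
refine (@mkL (fun k => coef f k + coef g k) (Order.min (lbd f) (lbd g)) _).
move=> k; rewrite lt_min => /andP[Hf Hg].
by rewrite !lbdP // addr0.
Defined.

Definition lopp (f : laurent) : laurent.
Proof.
refine (@mkL (fun k => - coef f k) (lbd f) _).
by move=> k Hk; rewrite lbdP // oppr0.
Defined.

Definition lmul (f g : laurent) : laurent.
Proof.
refine (@mkL (fun k => if lbd f + lbd g <= k then
   \sum_(j < (absz (k - (lbd f + lbd g))%R).+1)
        coef f (lbd f + j%:Z) * coef g (k - lbd f - j%:Z) else 0)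
   (lbd f + lbd g) _).
by move=> k Hk; rewrite leNgt Hk.
Defined.

Definition lxmul (j : int) (f : laurent) : laurent.
Proof.
refine (@mkL (fun k => coef f (k - j)) (lbd f + j) _).
by move=> k Hk; rewrite lbdP // ltrBlDr.
Defined.

(* sigma_q f (x) = f (q x): the coefficient of x^k is multiplied by q^k *)
Definition lsigma (q : C) (f : laurent) : laurent.
Proof.
refine (@mkL (fun k => q ^ k * coef f k) (lbd f) _).
by move=> k Hk; rewrite lbdP // mulr0.
Defined.

Definition lzero : laurent := lconst 0.
Definition lone : laurent := lconst 1.

Definition lexp (f : laurent) (n : nat) : laurent := iter n (lmul f) lone.

(* multiplicative inverse in the field of Laurent series (1/f);
   for f = 0 it is an arbitrary (irrelevant) series *)
Definition linv (f : laurent) : laurent :=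
  epsilon (inhabits lzero) (fun g => lmul f g = lone).

Definition lsum (s : seq laurent) : laurent := foldr ladd lzero s.

Definition mxsigma (q : C) (h : laurent) : laurent := lopp (lxmul 1 (lsigma q h)).

(* P_m = sum_{k=0}^{m-1} (-x sigma_q)^k P   (so P_0 = 0, P_1 = P) *)
Definition Pseq (q : C) (P : laurent) (m : nat) : laurent :=
  lsum [seq iter k (mxsigma q) P | k <- iota 0 m].

(* j-th factor (j = 1..n) of L_{n,n}^P :  h |-> (1/P_{n+1-j}) (x^j sigma_q - (-1)^j) h *)
Definition Lfactor (q : C) (P : laurent) (n j : nat) (h : laurent) : laurent :=
  lmul (linv (Pseq q P (n.+1 - j)))
       (ladd (lxmul j%:Z (lsigma q h)) (lopp (lmul (lconst ((-1) ^+ j)) h))).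

(* L_{n,n}^P = (1/P_n)(x sigma_q - (-1)^1)(1/P_{n-1})(x^2 sigma_q - (-1)^2) ... (1/P_1)(x^n sigma_q - (-1)^n),
   factor j = 1 outermost, j = n applied first *)
Definition LnnP (q : C) (P : laurent) (n : nat) (g : laurent) : laurent :=
  foldr (fun j h => Lfactor q P n j h) g (iota 1 n).

(* Main.v *)
Require Import Defs.
From HB Require Import structures.
From mathcomp Require Import all_boot all_order all_algebra complex.
From mathcomp Require Import zify.
From Stdlib Require Import Ring Permutation Classical ProofIrrelevance FunctionalExtensionality ClassicalEpsilon.
Import Order.TTheory GRing.Theory Num.Theory.
Local Open Scope ring_scope.

Lemma leq_ext (f g : laurent) : (forall k, coef f k = coef g k) -> f = g.
Proof.
case: f g => [cf Hf] [cg Hg] /= H.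
have E : cf = cg by apply: functional_extensionality.
subst cg. by rewrite (proof_irrelevance _ Hf Hg).
Qed.

Definition valid (a : int) (f : laurent) := forall k, k < a -> coef f k = 0.

Lemma valid_lbd f : valid (lbd f) f.
Proof. by move=> k; apply: lbdP. Qed.

Lemma valid_le (a b : int) (f : laurent) : valid a f -> b <= a -> valid b f.
Proof. by move=> H Hb k Hk; apply: H; apply: lt_le_trans Hb. Qed.

Definition Sm (f g : laurent) (a b k : int) : C :=
  if a + b <= k then \sum_(j < (absz (k - (a+b))%R).+1) coef f (a + j%:Z) * coef g (k - a - j%:Z) else 0.

Lemma coef_lmul f g k : coef (lmul f g) k = Sm f g (lbd f) (lbd g) k.
Proof. by []. Qed.

Lemma Sm_stepl (f g : laurent) (a b k : int) : valid a f -> Sm f g (a - 1) b k = Sm f g a b k.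
Proof.
move=> Hf; rewrite /Sm.
case: (lerP (a + b) k) => H1.
  have -> : a - 1 + b <= k by lia.
  have -> : absz (k - (a - 1 + b))%R = (absz (k - (a + b))%R).+1 by lia.
  rewrite big_ord_recl Hf; last by rewrite /=; lia.
  rewrite mul0r add0r; apply: eq_bigr => j _; rewrite lift0; congr (coef f _ * coef g _); lia.
case: (lerP (a - 1 + b) k) => H2 //.
have -> : absz (k - (a - 1 + b))%R = 0%N by lia.
by rewrite big_ord1 /= Hf ?mul0r //; lia.
Qed.

Lemma Sm_stepr (f g : laurent) (a b k : int) : valid b g -> Sm f g a (b - 1) k = Sm f g a b k.
Proof.
move=> Hg; rewrite /Sm.
case: (lerP (a + b) k) => H1.
  have -> : a + (b - 1) <= k by lia.
  have -> : absz (k - (a + (b - 1)))%R = (absz (k - (a + b))%R).+1 by lia.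
  rewrite big_ord_recr /= [X in _ * X]Hg; last by lia.
  by rewrite mulr0 addr0.
case: (lerP (a + (b - 1)) k) => H2 //.
have -> : absz (k - (a + (b - 1)))%R = 0%N by lia.
by rewrite big_ord1 /= Hg ?mulr0 //; lia.
Qed.

Lemma Sm_down (f g : laurent) (a b k : int) (d e : nat) : valid a f -> valid b g ->
  Sm f g (a - d%:Z) (b - e%:Z) k = Sm f g a b k.
Proof.
move=> Hf Hg.
have Hl : forall b', Sm f g (a - d%:Z) b' k = Sm f g a b' k.
  move=> b'; elim: d => [|d IH]; first by rewrite subr0.
  rewrite -IH -(@Sm_stepl f g (a - d%:Z)); last by move=> kk Hk; apply: Hf; lia.
  congr Sm; lia.
rewrite Hl; elim: e => [|e IH]; first by rewrite subr0.
rewrite -IH -(@Sm_stepr f g a (b - e%:Z)); last by move=> kk Hk; apply: Hg; lia.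
congr Sm; lia.
Qed.

Lemma Sm_inv (f g : laurent) (a b a' b' k : int) : valid a f -> valid b g -> valid a' f -> valid b' g ->
  Sm f g a b k = Sm f g a' b' k.
Proof.
move=> Ha Hb Ha' Hb'.
pose c := Order.min a a'. pose d := Order.min b b'.
rewrite -[LHS](@Sm_down f g a b k (absz (a - c)) (absz (b - d))) //.
rewrite -[RHS](@Sm_down f g a' b' k (absz (a' - c)) (absz (b' - d))) //.
congr Sm; rewrite /c /d; lia.
Qed.

Lemma mul_coef (f g : laurent) (a b k : int) : valid a f -> valid b g -> coef (lmul f g) k = Sm f g a b k.
Proof. move=> Ha Hb; rewrite coef_lmul; apply: Sm_inv => //; exact: valid_lbd. Qed.

Lemma mul_coefm (f g : laurent) (a b : int) (m : nat) : valid a f -> valid b g ->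
  coef (lmul f g) (a + b + m%:Z) = \sum_(j < m.+1) coef f (a + j%:Z) * coef g (b + (m - j)%:Z).
Proof.
move=> Ha Hb; rewrite (@mul_coef f g a b _ Ha Hb) /Sm.
have -> : a + b <= a + b + m%:Z by lia.
have -> : absz (a + b + m%:Z - (a + b))%R = m by lia.
apply: eq_bigr => j _; congr (_ * coef g _).
have := ltn_ord j; lia.
Qed.

Lemma mul_coef_lt (f g : laurent) (a b k : int) : valid a f -> valid b g -> k < a + b -> coef (lmul f g) k = 0.
Proof. move=> Ha Hb Hk; rewrite (@mul_coef f g a b _ Ha Hb) /Sm; by rewrite leNgt Hk. Qed.
Arguments mul_coef_lt {f g a b k}.
Arguments mul_coefm {f g a b} m.
Definition trunc (f : laurent) (a : int) (N : nat) : {poly C} := \poly_(i < N) coef f (a + i%:Z).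

Lemma coef_trunc f a N i : (i < N)%N -> (trunc f a N)`_i = coef f (a + i%:Z).
Proof. by move=> H; rewrite coef_poly H. Qed.

Lemma mul_coef_poly {f g : laurent} {a b : int} (N : nat) : valid a f -> valid b g -> forall m : nat, (m < N)%N ->
  coef (lmul f g) (a + b + m%:Z) = (trunc f a N * trunc g b N)`_m.
Proof.
move=> Ha Hb m HN; rewrite (@mul_coefm f g a b m Ha Hb) coefM; apply: eq_bigr => j _.
have Hj := ltn_ord j.
rewrite !coef_trunc //.
  by apply: leq_ltn_trans HN; rewrite leq_subr.
by apply: leq_ltn_trans HN; rewrite -ltnS.
Qed.

Lemma poly_mulr_ext (p r r' : {poly C}) m : (forall i, (i <= m)%N -> r`_i = r'`_i) ->
  (p * r)`_m = (p * r')`_m.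
Proof. by move=> H; rewrite !coefM; apply: eq_bigr => j _; rewrite H // leq_subr. Qed.

Lemma poly_mull_ext (p r r' : {poly C}) m : (forall i, (i <= m)%N -> r`_i = r'`_i) ->
  (r * p)`_m = (r' * p)`_m.
Proof. by move=> H; rewrite ![_ * p]mulrC; apply: poly_mulr_ext. Qed.

Lemma valid_mul {f g : laurent} {a b : int} : valid a f -> valid b g -> valid (a + b) (lmul f g).
Proof. by move=> Ha Hb k Hk; exact: (@mul_coef_lt f g a b k Ha Hb Hk). Qed.

Lemma valid_add {f g : laurent} {a : int} : valid a f -> valid a g -> valid a (ladd f g).
Proof. by move=> Ha Hb k Hk /=; rewrite /coef /= -!/(coef _ _) Ha // Hb // addr0. Qed.

Lemma coef_ladd f g k : coef (ladd f g) k = coef f k + coef g k. Proof. by []. Qed.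
Lemma coef_lopp f k : coef (lopp f) k = - coef f k. Proof. by []. Qed.
Lemma coef_lconst c k : coef (lconst c) k = if k == 0 then c else 0. Proof. by []. Qed.
Lemma coef_lxmul j f k : coef (lxmul j f) k = coef f (k - j). Proof. by []. Qed.
Lemma coef_lsigma q f k : coef (lsigma q f) k = q ^ k * coef f k. Proof. by []. Qed.

Lemma valid_lopp {f : laurent} {a : int} : valid a f -> valid a (lopp f).
Proof. by move=> Ha k Hk; rewrite coef_lopp Ha // oppr0. Qed.

Lemma valid_const c : valid 0 (lconst c).
Proof. by move=> k Hk; rewrite coef_lconst (negbTE (ltr0_neq0 Hk)). Qed.

Lemma coef_ext_from (c : int) (X Y : laurent) : valid c X -> valid c Y ->
  (forall m : nat, coef X (c + m%:Z) = coef Y (c + m%:Z)) -> X = Y.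
Proof.
move=> HX HY H; apply: leq_ext => k.
case: (ltrP k c) => Hk; first by rewrite HX // HY.
have -> : k = c + (absz (k - c)%R)%:Z by lia.
exact: H.
Qed.

Lemma lmulC (f g : laurent) : lmul f g = lmul g f.
Proof.
set a := lbd f; set b := lbd g.
have Ha := valid_lbd f; have Hb := valid_lbd g.
apply: (@coef_ext_from (a + b)); [exact: valid_mul | rewrite addrC; exact: valid_mul|].
move=> m; rewrite (mul_coef_poly m.+1 Ha Hb) // (addrC a b) (mul_coef_poly m.+1 Hb Ha) //.
by rewrite mulrC.
Qed.

Lemma lmulA (f g h : laurent) : lmul f (lmul g h) = lmul (lmul f g) h.
Proof.
set a := lbd f; set b := lbd g; set c := lbd h.
have Ha := valid_lbd f; have Hb := valid_lbd g; have Hc := valid_lbd h.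
have Hgh := valid_mul Hb Hc; have Hfg := valid_mul Ha Hb.
apply: (@coef_ext_from (a + b + c)).
- rewrite -addrA; exact: valid_mul.
- exact: valid_mul.
move=> m.
rewrite (mul_coef_poly m.+1 Hfg Hc) // [in LHS](_ : a + b + c + m%:Z = a + (b + c) + m%:Z); last by rewrite addrA.
rewrite (mul_coef_poly m.+1 Ha Hgh) //.
rewrite (@poly_mulr_ext _ _ (trunc g b m.+1 * trunc h c m.+1)); last first.
  by move=> i Hi; rewrite coef_trunc // (mul_coef_poly m.+1 Hb Hc).
rewrite (@poly_mull_ext (trunc h c m.+1) (trunc (lmul f g) (a + b) m.+1) (trunc f a m.+1 * trunc g b m.+1)); last first.
  by move=> i Hi; rewrite coef_trunc // (mul_coef_poly m.+1 Ha Hb).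
by rewrite mulrA.
Qed.

Lemma lmulDl (f g h : laurent) : lmul (ladd f g) h = ladd (lmul f h) (lmul g h).
Proof.
set a := Order.min (lbd f) (lbd g); set c := lbd h.
have Ha : valid a f by move=> k Hk; apply: valid_lbd; rewrite /a in Hk; lia.
have Hb : valid a g by move=> k Hk; apply: valid_lbd; rewrite /a in Hk; lia.
have Hc := valid_lbd h.
apply: (@coef_ext_from (a + c)).
- exact: valid_mul (valid_add Ha Hb) Hc.
- apply: valid_add; exact: valid_mul.
move=> m.
rewrite (mul_coef_poly m.+1 (valid_add Ha Hb) Hc) // coef_ladd.
rewrite (mul_coef_poly m.+1 Ha Hc) // (mul_coef_poly m.+1 Hb Hc) //.
have -> : trunc (ladd f g) a m.+1 = trunc f a m.+1 + trunc g a m.+1.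
  apply/polyP => i; rewrite coefD !coef_poly; case: ifP => //; by rewrite addr0.
by rewrite mulrDl coefD.
Qed.

Lemma lmul1 (f : laurent) : lmul lone f = f.
Proof.
set a := lbd f; have Ha := valid_lbd f.
apply: (@coef_ext_from (0 + a)); [exact: valid_mul (valid_const 1) Ha| by rewrite add0r|].
move=> m; rewrite (mul_coef_poly m.+1 (valid_const 1) Ha) //.
have -> : trunc lone 0 m.+1 = 1.
  apply/polyP => i; rewrite coef_poly coef1 coef_lconst add0r.
  case: ifP => Hi; first by case: i Hi.
  by case: i Hi.
by rewrite mul1r coef_trunc // add0r.
Qed.
Definition lsub (f g : laurent) := ladd f (lopp g).

Lemma laddC (f g : laurent) : ladd f g = ladd g f.
Proof. by apply: leq_ext => k; rewrite !coef_ladd addrC. Qed.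
Lemma laddA (f g h : laurent) : ladd f (ladd g h) = ladd (ladd f g) h.
Proof. by apply: leq_ext => k; rewrite !coef_ladd addrA. Qed.
Lemma ladd0 (f : laurent) : ladd lzero f = f.
Proof. by apply: leq_ext => k; rewrite !coef_ladd coef_lconst if_same add0r. Qed.
Lemma laddN (f : laurent) : ladd f (lopp f) = lzero.
Proof. by apply: leq_ext => k; rewrite !coef_ladd coef_lopp coef_lconst if_same subrr. Qed.

Lemma lring : ring_theory lzero lone ladd lmul lsub lopp eq.
Proof.
constructor.
- exact: ladd0.
- exact: laddC.
- exact: laddA.
- exact: lmul1.
- exact: lmulC.
- exact: lmulA.
- exact: lmulDl.
- by [].
- exact: laddN.
Qed.

Add Ring lring : lring.

Lemma coef_lzero k : coef lzero k = 0.
Proof. by rewrite coef_lconst if_same. Qed.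

Lemma coef_cmul c (g : laurent) k : coef (lmul (lconst c) g) k = c * coef g k.
Proof.
have Hb := valid_lbd g.
case: (ltrP k (0 + lbd g)) => Hk.
  rewrite (mul_coef_lt (valid_const c) Hb Hk) Hb ?mulr0 //; lia.
have -> : k = 0 + lbd g + (absz (k - lbd g)%R)%:Z by lia.
rewrite (mul_coefm _ (valid_const c) Hb) big_ord_recl big1 ?addr0.
  by rewrite coef_lconst /= subn0 add0r.
move=> i _; rewrite coef_lconst lift0; case: eqP => H; last by rewrite mul0r.
lia.
Qed.

Lemma lconstM c d : lconst (c * d) = lmul (lconst c) (lconst d).
Proof.
apply: leq_ext => k; rewrite coef_cmul !coef_lconst.
by case: ifP; rewrite ?mulr0.
Qed.

Lemma lconstN c : lconst (- c) = lopp (lconst c).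
Proof. apply: leq_ext => k; rewrite coef_lopp !coef_lconst; by case: ifP; rewrite ?oppr0. Qed.

Lemma lconst1 : lconst 1 = lone. Proof. by []. Qed.

Definition Phi (q : C) (j : int) (g : laurent) := lxmul j (lsigma q g).

Lemma coef_Phi q j g k : coef (Phi q j g) k = q ^ (k - j) * coef g (k - j).
Proof. by []. Qed.

Lemma Phi_add q j f g : Phi q j (ladd f g) = ladd (Phi q j f) (Phi q j g).
Proof. by apply: leq_ext => k; rewrite !(coef_Phi, coef_ladd) mulrDr. Qed.

Lemma Phi_opp q j f : Phi q j (lopp f) = lopp (Phi q j f).
Proof. by apply: leq_ext => k; rewrite !(coef_Phi, coef_lopp) mulrN. Qed.

Lemma Phi_zero q j : Phi q j lzero = lzero.
Proof. by apply: leq_ext => k; rewrite coef_Phi !coef_lzero mulr0. Qed.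

Lemma Phi0_const q c : Phi q 0 (lconst c) = lconst c.
Proof.
apply: leq_ext => k; rewrite coef_Phi subr0 !coef_lconst.
by case: ifP => [/eqP -> | _]; rewrite ?expr0z ?mul1r ?mulr0.
Qed.

Lemma valid_Phi (q : C) (j : int) {a : int} {g : laurent} : valid a g -> valid (a + j) (Phi q j g).
Proof. move=> H k Hk; rewrite coef_Phi H ?mulr0 //; lia. Qed.

Lemma Phi_mul (q : C) (i j : int) (f g : laurent) : q != 0 ->
  Phi q (i + j) (lmul f g) = lmul (Phi q i f) (Phi q j g).
Proof.
move=> Hq.
move: (valid_lbd f) (valid_lbd g); move: (lbd f) (lbd g) => a b Ha Hb.
have Ha' := valid_Phi q i Ha; have Hb' := valid_Phi q j Hb.
apply: (@coef_ext_from (a + i + (b + j))).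
- have -> : a + i + (b + j) = a + b + (i + j) by lia.
  apply: valid_Phi; exact: valid_mul.
- exact: valid_mul.
move=> m; rewrite (mul_coefm _ Ha' Hb') coef_Phi.
have -> : a + i + (b + j) + m%:Z - (i + j) = a + b + m%:Z by lia.
rewrite (mul_coefm _ Ha Hb) big_distrr; apply: eq_bigr => l _ /=.
have -> : a + i + l%:Z - i = a + l%:Z by lia.
have -> : b + j + (m - l)%:Z - j = b + (m - l)%:Z by lia.
have -> : a + b + m%:Z = (a + l%:Z) + (b + (m - l)%:Z).
  have := ltn_ord l; lia.
by rewrite expfzDr // mulrACA.
Qed.
Fixpoint hsa (a : laurent) (F : nat -> laurent) (j : nat) : laurent :=
  match j with 0 => F 0%N | S j' => ladd (lmul a (hsa a F j')) (F j) end.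

Fixpoint hs (A : seq laurent) : nat -> laurent :=
  match A with
  | [::] => fun j => if j is 0 then lone else lzero
  | a :: A' => hsa a (hs A')
  end.

Lemma hsaS a F j : hsa a F j.+1 = ladd (lmul a (hsa a F j)) (F j.+1).
Proof. by []. Qed.

Lemma hsa_ext a F G j : (forall i, F i = G i) -> hsa a F j = hsa a G j.
Proof. by move=> H; elim: j => [|j IH] /=; rewrite ?IH H. Qed.

Lemma hsa_swap_aux a b F j :
  hsa a (hsa b F) j.+1 = ladd (lmul b (hsa a (hsa b F) j)) (hsa a F j.+1).
Proof.
elim: j => [|j IH]; first by rewrite /=; ring.
rewrite (hsaS a (hsa b F) j.+1) (hsaS b F j.+1) (hsaS a F j.+1).
rewrite [in LHS]IH [in RHS](hsaS a (hsa b F) j); ring.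
Qed.

Lemma hsa_swap a b F j : hsa a (hsa b F) j = hsa b (hsa a F) j.
Proof.
elim: j => [|j IH] //.
by rewrite hsa_swap_aux /= IH.
Qed.

Lemma hs_perm (A B : seq laurent) : Permutation A B -> forall j, hs A j = hs B j.
Proof.
elim=> [|x l l' _ IH|x y l|l l' l'' _ IH1 _ IH2] j //=.
- exact: hsa_ext.
- exact: hsa_swap.
- by rewrite IH1 IH2.
Qed.

Lemma hsa_DD a b F j :
  lsub (hsa a F j.+1) (hsa b F j.+1) = lmul (lsub a b) (hsa a (hsa b F) j).
Proof.
elim: j => [|j IH]; first by rewrite /=; ring.
rewrite (hsaS a F j.+1) (hsaS b F j.+1) (hsaS a (hsa b F) j).
have E : hsa a F j.+1 = ladd (hsa b F j.+1) (lmul (lsub a b) (hsa a (hsa b F) j)).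
  rewrite -IH; ring.
rewrite E; ring.
Qed.

Lemma hs0 A : hs A 0 = lone.
Proof. by elim: A. Qed.

Lemma Phi_hs (q : C) A j : q != 0 -> Phi q j%:Z (hs A j) = hs (map (Phi q 1) A) j.
Proof.
move=> Hq; elim: A j => [|a A IH] j /=.
  by case: j => [|j]; rewrite ?Phi0_const ?Phi_zero.
elim: j => [|j IHj] /=; first exact: IH.
rewrite Phi_add IH -IHj -Phi_mul //.
Qed.

Lemma hs_opp A j : hs (map lopp A) j = lmul (lconst ((-1) ^+ j)) (hs A j).
Proof.
elim: A j => [|a A IH] j /=.
  case: j => [|j]; rewrite ?expr0 ?lconst1; ring.
elim: j => [|j IHj] /=; first by rewrite IH expr0 lconst1; ring.
rewrite IHj IH exprS lconstM lconstN lconst1; ring.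
Qed.

Lemma hs1 a n : hs [:: a] n = lexp a n.
Proof.
elim: n => [|n IH] //.
change (hs [:: a] n.+1) with (ladd (lmul a (hs [:: a] n)) lzero).
rewrite IH; change (lexp a n.+1) with (lmul a (lexp a n)); ring.
Qed.
Lemma exists_lowest {f : laurent} : f <> lzero -> exists v, coef f v != 0 /\ valid v f.
Proof.
move=> Hf.
have [k Hk] : exists k, coef f k != 0.
  apply: NNPP => H; apply: Hf; apply: leq_ext => k; rewrite coef_lzero.
  case: (eqVneq (coef f k) 0) => // Hk; exfalso; apply: H; by exists k.
have Hl : lbd f <= k.
  case: (ltrP k (lbd f)) => // H; by rewrite lbdP ?eqxx in Hk.
have exP : exists m : nat, coef f (lbd f + m%:Z) != 0.
  by exists (absz (k - lbd f)%R); have -> : lbd f + (absz (k - lbd f)%R)%:Z = k by lia.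
case: (ex_minnP exP) => m Hm Hmin.
exists (lbd f + m%:Z); split => // k' Hk'.
case: (ltrP k' (lbd f)) => H; first exact: lbdP.
case: (eqVneq (coef f k') 0) => // Hn.
have E : k' = lbd f + (absz (k' - lbd f)%R)%:Z by lia.
move: Hn; rewrite {1}E => /Hmin; lia.
Qed.

Definition MX (q : C) (h : laurent) := mxsigma q h.

Lemma valid_MX (q : C) {a : int} {h : laurent} : valid a h -> valid (a + 1) (mxsigma q h).
Proof.
move=> H k Hk; rewrite /mxsigma coef_lopp.
change (coef (Phi q 1 h) k) with (coef (lxmul 1 (lsigma q h)) k).
by rewrite coef_Phi H ?mulr0 ?oppr0 //; lia.
Qed.

Lemma mxsigma_add q f g : mxsigma q (ladd f g) = ladd (mxsigma q f) (mxsigma q g).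
Proof. rewrite /mxsigma -/(Phi q 1 _) -/(Phi q 1 f) -/(Phi q 1 g) Phi_add; ring. Qed.

Lemma mxsigma_zero q : mxsigma q lzero = lzero.
Proof. rewrite /mxsigma -/(Phi q 1 _) Phi_zero; ring. Qed.

Lemma lsum_shift q P s m :
  lsum [seq iter k (mxsigma q) P | k <- iota s.+1 m] =
  mxsigma q (lsum [seq iter k (mxsigma q) P | k <- iota s m]).
Proof.
elim: m s => [|m IH] s /=; first by rewrite mxsigma_zero.
by rewrite IH mxsigma_add.
Qed.

Lemma PseqS q P m : Pseq q P m.+1 = ladd P (mxsigma q (Pseq q P m)).
Proof. by rewrite /Pseq /= -lsum_shift. Qed.

Lemma Pseq0 q P : Pseq q P 0 = lzero.
Proof. by []. Qed.

Lemma Pseq_nz q P m : P <> lzero -> Pseq q P m.+1 <> lzero.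
Proof.
move=> HP; case: (exists_lowest HP) => v [Hv Hval].
have Hm : forall m, valid v (Pseq q P m).
  elim=> [|k IH]; first by move=> k _; rewrite Pseq0 coef_lzero.
  rewrite PseqS; apply: valid_add => //.
  move=> k' Hk'; apply: (valid_MX q IH); lia.
rewrite PseqS => H.
have E : coef (ladd P (mxsigma q (Pseq q P m))) v = coef lzero v by rewrite H.
rewrite coef_ladd coef_lzero (valid_MX q (Hm m)) ?addr0 in E; last by lia.
by rewrite E eqxx in Hv.
Qed.
Fixpoint bf (u : nat -> C) (fu m : nat) : C :=
  match fu with
  | 0 => 0
  | S fu' => if m is 0 then (u 0%N)^-1
             else - (u 0%N)^-1 * \sum_(i < m) u i.+1 * bf u fu' (m - i.+1)
  end.

Lemma bf_irr u fu1 fu2 m : (m < fu1)%N -> (m < fu2)%N -> bf u fu1 m = bf u fu2 m.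
Proof.
elim: fu1 fu2 m => [|a IH] [|b] m //= H1 H2.
case: m H1 H2 => [|m] H1 H2 //=.
apply: congr1; apply: eq_bigr => i _; apply: congr1; apply: IH; lia.
Qed.

Definition binv u m := bf u m.+1 m.

Lemma binv_rec u m : binv u m.+1 = - (u 0%N)^-1 * \sum_(i < m.+1) u i.+1 * binv u (m.+1 - i.+1).
Proof.
change (binv u m.+1) with (- (u 0%N)^-1 * \sum_(i < m.+1) u i.+1 * bf u m.+1 (m.+1 - i.+1)).
apply: congr1; apply: eq_bigr => i _; apply: congr1; rewrite /binv; apply: bf_irr; lia.
Qed.

Lemma binv0 u : binv u 0 = (u 0%N)^-1.
Proof. by []. Qed.

Definition ginv (u : nat -> C) (v : int) : laurent.
Proof.
refine (@mkL (fun k => if - v <= k then binv u (absz (k + v)) else 0) (- v) _).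
by move=> k Hk; rewrite leNgt Hk.
Defined.

Lemma inv_exists (Q : laurent) : Q <> lzero -> exists g, lmul Q g = lone.
Proof.
move=> HQ; case: (exists_lowest HQ) => v [Hv Hval].
pose u := fun i : nat => coef Q (v + i%:Z).
have Hu0 : u 0%N != 0 by rewrite /u addr0.
have Hg : valid (- v) (ginv u v) by move=> k Hk; rewrite /coef /= leNgt Hk.
have cg : forall l : nat, coef (ginv u v) (- v + l%:Z) = binv u l.
  move=> l; rewrite /coef /=.
  have -> : - v <= - v + l%:Z by lia.
  congr binv; lia.
exists (ginv u v).
apply: (@coef_ext_from (v + - v)); first exact: valid_mul.
  by rewrite subrr; exact: valid_const.
move=> m; rewrite (mul_coefm _ Hval Hg).
under eq_bigr => l _ do rewrite cg.
rewrite coef_lconst subrr add0r.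
case: m => [|m].
  by rewrite big_ord1 /= binv0 /u addr0 mulfV // -/(u 0%N).
rewrite big_ord_recl /= subn0 binv_rec.
have -> : \sum_(i < m.+1) coef Q (v + (lift ord0 i)%:Z) * binv u (m.+1 - lift ord0 i) =
          \sum_(i < m.+1) u i.+1 * binv u (m.+1 - i.+1).
  by apply: eq_bigr => i _; rewrite lift0.
change (coef Q (v + 0%Z)) with (u 0%N).
rewrite mulrA mulrN mulfV // mulN1r addNr.
by [].
Qed.

Lemma linvK (Q X : laurent) : Q <> lzero -> lmul (linv Q) (lmul Q X) = X.
Proof.
move=> HQ.
have H : lmul Q (linv Q) = lone.
  rewrite /linv. apply (epsilon_spec (inhabits lzero) (fun g => lmul Q g = lone)). exact: inv_exists HQ.
rewrite lmulA (lmulC _ Q) H; ring.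
Qed.
Definition w (q : C) (P f : laurent) (m : nat) := lsub (Pseq q P m) f.
Definition W (q : C) (P f : laurent) (k : nat) := [seq w q P f m | m <- iota 0 k.+1].

Lemma Tw (q : C) (P f : laurent) m :
  ladd (lxmul 1 (lsigma q f)) f = P -> Phi q 1 (w q P f m) = lopp (w q P f m.+1).
Proof.
move=> Hf.
have E1 : Phi q 1 f = lsub P f by rewrite -Hf /Phi; ring.
rewrite /w /lsub Phi_add Phi_opp E1 PseqS /mxsigma /Phi /lsub; ring.
Qed.

Lemma map_TW (q : C) (P f : laurent) k :
  ladd (lxmul 1 (lsigma q f)) f = P ->
  map (Phi q 1) (W q P f k) = map lopp [seq w q P f m | m <- iota 1 k.+1].
Proof.
move=> Hf; rewrite /W -map_comp (iotaDl 1 0) -!map_comp.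
by apply: eq_map => m /=; rewrite Tw.
Qed.

Lemma hs_cons a A : hs (a :: A) = hsa a (hs A). Proof. by []. Qed.

Lemma iota_rcons s k : iota s k.+1 = iota s k ++ [:: (s + k)%N].
Proof. by rewrite -addn1 iotaD. Qed.

Lemma step (q : C) (P f : laurent) (n k j' : nat) (s : C) :
  q != 0 -> P <> lzero -> ladd (lxmul 1 (lsigma q f)) f = P ->
  (n.+1 - j'.+1 = k.+1)%N ->
  Lfactor q P n j'.+1 (lmul (lconst s) (hs (W q P f k) j'.+1)) =
  lmul (lconst (s * (-1) ^+ j'.+1)) (hs (W q P f k.+1) j').
Proof.
move=> Hq HP Hf Hnk.
rewrite /Lfactor Hnk.
set Q := Pseq q P k.+1.
set A := [seq w q P f m | m <- iota 1 k].
have HW' : [seq w q P f m | m <- iota 1 k.+1] = A ++ [:: w q P f k.+1].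
  by rewrite iota_rcons map_cat add1n.
have HWk : W q P f k = w q P f 0 :: A by [].
have HWk1 : W q P f k.+1 = w q P f 0 :: (A ++ [:: w q P f k.+1]).
  by rewrite /W iota_rcons map_cat.
have Hphi : lxmul j'.+1%:Z (lsigma q (lmul (lconst s) (hs (W q P f k) j'.+1))) =
            lmul (lconst s) (lmul (lconst ((-1) ^+ j'.+1)) (hs (A ++ [:: w q P f k.+1]) j'.+1)).
  change (lxmul j'.+1%:Z (lsigma q ?X)) with (Phi q (0 + j'.+1%:Z) X).
  rewrite Phi_mul // Phi0_const Phi_hs // map_TW // hs_opp HW'.
  by [].
have Hdd : lsub (hs (A ++ [:: w q P f k.+1]) j'.+1) (hs (W q P f k) j'.+1) =
           lmul Q (hs (W q P f k.+1) j').
  rewrite (@hs_perm _ _ (Permutation_sym (Permutation_cons_append A (w q P f k.+1))) j'.+1) HWk [hs (w q P f k.+1 :: A)]hs_cons [hs (w q P f 0 :: A)]hs_cons.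
  rewrite hsa_DD.
  have -> : lsub (w q P f k.+1) (w q P f 0) = Q by rewrite /w Pseq0 /Q; ring.
  congr lmul; rewrite HWk1.
  change (hsa (w q P f k.+1) (hsa (w q P f 0) (hs A)) j') with (hs (w q P f k.+1 :: w q P f 0 :: A) j').
  apply: (@hs_perm (w q P f k.+1 :: w q P f 0 :: A)).
  apply: perm_trans; first exact: perm_swap.
  apply: perm_skip; exact: Permutation_cons_append.
rewrite Hphi.
have -> : ladd (lmul (lconst s) (lmul (lconst ((-1) ^+ j'.+1)) (hs (A ++ [:: w q P f k.+1]) j'.+1)))
    (lopp (lmul (lconst ((-1) ^+ j'.+1)) (lmul (lconst s) (hs (W q P f k) j'.+1)))) =
   lmul Q (lmul (lconst (s * (-1) ^+ j'.+1)) (hs (W q P f k.+1) j')).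
  rewrite lconstM.
  transitivity (lmul (lmul (lconst s) (lconst ((-1) ^+ j'.+1))) (lmul Q (hs (W q P f k.+1) j'))).
    rewrite -Hdd /lsub; ring.
  ring.
apply: linvK; exact: Pseq_nz.
Qed.
Fixpoint ex (n k : nat) : nat := if k is k'.+1 then (ex n k' + (n - k'))%N else n.

Lemma ex_closed n k : (k <= n)%N -> (2 * ex n k + k * k.-1 = 2 * n + 2 * k * n)%N.
Proof.
elim: k => [|k IH] Hk /=; first lia.
have := IH (ltnW Hk); nia.
Qed.

Lemma ex_final n : (1 <= n)%N -> ex n n = ((n * n.-1) %/ 2 + 2 * n)%N.
Proof.
move=> Hn; have H := @ex_closed n n (leqnn n).
have H2 : (n * n.-1 + n = n * n)%N by case: n Hn H => [|n] //= _ _; nia.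
lia.
Qed.

Definition st (q : C) (P : laurent) (n : nat) (g : laurent) (k : nat) :=
  foldr (fun j h => Lfactor q P n j h) g (iota (n - k).+1 k).

Lemma lexp_opp f n : lexp (lopp f) n = lmul (lconst ((-1) ^+ n)) (lexp f n).
Proof.
by rewrite -!hs1 -[[:: lopp f]]/(map lopp [:: f]) hs_opp.
Qed.

Theorem theorem1 (q : C) (n : nat) (P f : laurent) :
  q != 0 -> (1 <= n)%N -> P <> lzero ->
  ladd (lxmul 1 (lsigma q f)) f = P ->
  LnnP q P n (lexp f n) = lconst ((-1) ^+ ((n * n.-1) %/ 2)).
Proof.
move=> Hq Hn HP Hf.
have Hst : forall k, (k <= n)%N ->
    st q P n (lexp f n) k = lmul (lconst ((-1) ^+ ex n k)) (hs (W q P f k) (n - k)).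
  elim=> [|k IH] Hk.
    change (st q P n (lexp f n) 0) with (lexp f n).
    change (W q P f 0) with [:: w q P f 0]; change (ex n 0) with n.
    rewrite subn0 hs1 /w Pseq0.
    have -> : lsub lzero f = lopp f by rewrite /lsub; ring.
    rewrite lexp_opp lmulA -lconstM -exprMn mulrNN mulr1 expr1n lconst1; ring.
  have E1 : (n - k.+1).+1 = (n - k)%N by lia.
  have E2 : (n - k.+1).+2 = (n - k).+1 by lia.
  change (st q P n (lexp f n) k.+1) with
    (Lfactor q P n (n - k.+1).+1 (foldr (fun j h => Lfactor q P n j h) (lexp f n) (iota (n - k.+1).+2 k))).
  rewrite E2 -/(st q P n (lexp f n) k) IH; last exact: ltnW.
  rewrite -E1 step //; last by lia.
  by rewrite /= exprD E1.
have := Hst n (leqnn n).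
rewrite /st subnn hs0 => H.
rewrite /LnnP H ex_final // exprD exprM expr2 mulrNN mulr1 expr1n mulr1.
by rewrite lmulC lmul1.
Qed.
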